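(* Let $\lambda_1,\lambda_2,\sigma_1,\sigma_2\in\mathbb{C}^*$ and $\eta_1,\eta_2\in\mathbb{C}$ with $\lambda_1\neq\lambda_2$. Then the $\mathcal{G}$-submodule of $\Omega(\lambda_1,\eta_1,\sigma_1,0)\otimes\Omega(\lambda_2,\eta_2,0,\sigma_2)$ generated by $1\otimes 1$ is the whole module $\Omega(\lambda_1,\eta_1,\sigma_1,0)\otimes\Omega(\lambda_2,\eta_2,0,\sigma_2)$.
   Context: The planar Galilean conformal algebra $\mathcal{G}$ is the complex Lie algebra with basis $\{L_m,H_m,I_m,J_m\mid m\in\mathbb{Z}\}$ and brackets $[L_m,L_n]=(n-m)L_{m+n}$, $[L_m,H_n]=nH_{m+n}$, $[L_m,I_n]=(n-m)I_{m+n}$, $[L_m,J_n]=(n-m)J_{m+n}$, $[H_m,I_n]=I_{m+n}$, $[H_m,J_n]=-J_{m+n}$, and $[H_m,H_n]=[I_m,I_n]=[J_m,J_n]=[I_m,J_n]=0$ for all $m,n\in\mathbb{Z}$. For $\lambda,\sigma\in\mathbb{C}^*$, $\eta\in\mathbb{C}$, the module $\Omega(\lambda,\eta,\sigma,0)$ is $\mathbb{C}[X,Y]$ with $L_m f(X,Y)=\lambda^m(Y-mX+m\eta)f(X,Y-m)$, $H_m f(X,Y)=\lambda^m X f(X,Y-m)$, $I_m f(X,Y)=\lambda^m\sigma f(X-1,Y-m)$, $J_m f(X,Y)=0$. The module $\Omega(\lambda,\eta,0,\sigma)$ is $\mathbb{C}[S,T]$ with $L_m f(S,T)=\lambda^m(T+mS+m\eta)f(S,T-m)$,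 $H_m f(S,T)=\lambda^m S f(S,T-m)$, $I_m f(S,T)=0$, $J_m f(S,T)=\lambda^m\sigma f(S+1,T-m)$. The tensor product of $\mathcal{G}$-modules has action $x(v\otimes w)=xv\otimes w+v\otimes xw$. *)

(* Defs.v *)
From HB Require Import structures.
From mathcomp Require Import all_boot all_order all_algebra.
From mathcomp Require Import reals complex.
From mathcomp Require Import mpoly.
Set Implicit Arguments. Unset Strict Implicit. Unset Printing Implicit Defensive.
Import Order.TTheory GRing.Theory Num.Theory.
Local Open Scope ring_scope.

Notation Cx R := (complex R).

(* The tensor product Omega(l1,e1,s1,0) (x) Omega(l2,e2,0,s2) = C[X,Y] (x) C[S,T]
   is identified with C[X,Y,S,T] via f(X,Y) (x) g(S,T) |-> f(X,Y) g(S,T). *)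
Notation TP R := {mpoly (Cx R)[4]}.

Definition v0 : 'I_4 := @Ordinal 4 0 isT.
Definition v1 : 'I_4 := @Ordinal 4 1 isT.
Definition v2 : 'I_4 := @Ordinal 4 2 isT.
Definition v3 : 'I_4 := @Ordinal 4 3 isT.

Section Module.
Variable R : realType.
Local Notation C := (Cx R).

Definition VX : TP R := 'X_v0.
Definition VY : TP R := 'X_v1.
Definition VS : TP R := 'X_v2.
Definition VT : TP R := 'X_v3.

Definition shift (a b c d : C) (P : TP R) : TP R :=
  comp_mpoly [tuple VX + a%:MP; VY + b%:MP; VS + c%:MP; VT + d%:MP] P.

Inductive gca_basis : Type :=
| gL of int | gH of int | gI of int | gJ of int.

(* action on the tensor product x(v (x) w) = xv (x) w + v (x) xw, extended linearly *)
Definition tensor_act (l1 e1 s1 l2 e2 s2 : C) (x : gca_basis) (P : TP R) : TP R :=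
  match x with
  | gL m => (l1 ^ m) *: ((VY - (m%:~R : C) *: VX + (m%:~R * e1)%:MP) * shift 0 (- m%:~R) 0 0 P)
          + (l2 ^ m) *: ((VT + (m%:~R : C) *: VS + (m%:~R * e2)%:MP) * shift 0 0 0 (- m%:~R) P)
  | gH m => (l1 ^ m) *: (VX * shift 0 (- m%:~R) 0 0 P)
          + (l2 ^ m) *: (VS * shift 0 0 0 (- m%:~R) P)
  | gI m => (l1 ^ m * s1) *: shift (-1) (- m%:~R) 0 0 P
  | gJ m => (l2 ^ m * s2) *: shift 0 0 1 (- m%:~R) P
  end.

Definition is_submodule (act : gca_basis -> TP R -> TP R) (W : TP R -> Prop) : Prop :=
  [/\ W 0,
      (forall P Q, W P -> W Q -> W (P + Q)),
      (forall (c : C) P, W P -> W (c *: P)) &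
      (forall x P, W P -> W (act x P))].

Definition generated_submodule (act : gca_basis -> TP R -> TP R) (v : TP R) (P : TP R) : Prop :=
  forall W, is_submodule act W -> W v -> W P.

End Module.

(* Main.v *)
Require Import Defs.
From HB Require Import structures.
From mathcomp Require Import all_boot all_order all_algebra.
From mathcomp Require Import reals complex.
From mathcomp Require Import mpoly.
From mathcomp Require Import ring.
Import Order.TTheory GRing.Theory Num.Theory.
Local Open Scope ring_scope.

Section Aux.
Variable R : realType.
Local Notation C := (Cx R).

Inductive Fd : nat -> TP R -> Prop :=
| F0 d (c : C) : Fd d c%:MP
| Fup d p : Fd d p -> Fd d.+1 p
| Fadd d p q : Fd d p -> Fd d q -> Fd d (p + q)
| FX d (i : 'I_4) p : Fd d p -> Fd d.+1 ('X_i * p).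

Lemma Fd0 d : Fd d 0.
Proof. by rewrite -mpolyC0; apply: F0. Qed.

Lemma FdZ d (c : C) p : Fd d p -> Fd d (c *: p).
Proof.
elim=> {d p} [d c'|d p _ IH|d p q _ IHp _ IHq|d i p _ IH].
- by rewrite -mul_mpolyC -mpolyCM; apply: F0.
- by apply: Fup.
- by rewrite scalerDr; apply: Fadd.
- by rewrite scalerAr; apply: FX.
Qed.

Lemma FdB d p q : Fd d p -> Fd d q -> Fd d (p - q).
Proof. by move=> Hp Hq; apply: Fadd => //; rewrite -scaleN1r; apply: FdZ. Qed.

Lemma Fd_mono d d' p : Fd d p -> (d <= d')%N -> Fd d' p.
Proof.
move=> Hp; elim: d' => [|d' IH]; first by rewrite leqn0 => /eqP <-.
by rewrite leq_eqVlt => /orP [/eqP <- //| /IH]; apply: Fup.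
Qed.

Lemma shiftX (a b c e : C) (i : 'I_4) : exists k : C, shift a b c e ('X_i : TP R) = 'X_i + k%:MP.
Proof.
rewrite /shift comp_mpolyXU.
case: i => [[|[|[|[|k]]]] Hi] //=.
- by exists a; congr (_ + _); rewrite /VX; congr 'X_(_); apply: val_inj.
- by exists b; congr (_ + _); rewrite /VY; congr 'X_(_); apply: val_inj.
- by exists c; congr (_ + _); rewrite /VS; congr 'X_(_); apply: val_inj.
- by exists e; congr (_ + _); rewrite /VT; congr 'X_(_); apply: val_inj.
Qed.

Lemma shiftM (a b c e : C) (p q : TP R) : shift a b c e (p * q) = shift a b c e p * shift a b c e q.
Proof. by rewrite /shift rmorphM. Qed.

Lemma shiftD (a b c e : C) (p q : TP R) : shift a b c e (p + q) = shift a b c e p + shift a b c e q.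
Proof. by rewrite /shift raddfD. Qed.

Lemma shiftC (a b c e : C) (k : C) : shift a b c e (k%:MP : TP R) = k%:MP.
Proof. by rewrite /shift comp_mpolyC. Qed.

Lemma Fd_shift (a b c e : C) d p : Fd d p -> Fd d (shift a b c e p).
Proof.
elim=> {d p} [d c'|d p _ IH|d p q _ IHp _ IHq|d i p _ IH].
- by rewrite shiftC; apply: F0.
- by apply: Fup.
- by rewrite shiftD; apply: Fadd.
- rewrite shiftM; have [k ->] := shiftX a b c e i.
  rewrite mulrDl mul_mpolyC; apply: Fadd; first by apply: FX.
  by apply: Fup; apply: FdZ.
Qed.

Lemma Fd_diff (a b c e : C) d p (j : 'I_4) : Fd d p -> Fd d ('X_j * (shift a b c e p - p)).
Proof.
elim=> {d p} [d c'|d p _ IH|d p q _ IHp _ IHq|d i p Hp IH].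
- by rewrite shiftC subrr mulr0; apply: Fd0.
- by apply: Fup.
- by rewrite shiftD opprD addrACA mulrDr; apply: Fadd.
- rewrite shiftM; have [k ->] := shiftX a b c e i.
  have -> : 'X_j * (('X_i + k%:MP) * shift a b c e p - 'X_i * p)
     = 'X_i * ('X_j * (shift a b c e p - p)) + k *: ('X_j * shift a b c e p).
    by rewrite -mul_mpolyC; ring.
  apply: Fadd; first by apply: FX.
  by apply: FdZ; apply: FX; apply: Fd_shift.
Qed.

Lemma Fd_all p : exists d, Fd d p.
Proof.
elim/mpolyind: p => [|c m p _ _ [d Hd]]; first by exists 0%N; apply: Fd0.
have [d' Hm] : exists d', Fd d' 'X_[m].
  rewrite -(comp_mpoly_id 'X_[m]) comp_mpolyX.
  elim/big_rec: _ => [|i x _ [d1 H1]]; first by exists 0%N; rewrite -mpolyC1; apply: F0.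
  rewrite tnth_map tnth_ord_tuple.
  elim: (m i) => [|k [d2 H2]]; first by exists d1; rewrite expr0 mul1r.
  exists d2.+1; rewrite exprS -mulrA; by apply: FX.
exists (maxn d d'); apply: Fadd; first by apply: FdZ; apply: Fd_mono Hm (leq_maxr _ _).
by apply: Fd_mono Hd (leq_maxl _ _).
Qed.


Lemma tuple0 : [tuple VX R + (0:C)%:MP; VY R + (0:C)%:MP; VS R + (0:C)%:MP; VT R + (0:C)%:MP] = [tuple ('X_i : TP R) | i < 4].
Proof.
apply: eq_from_tnth => i; rewrite tnth_map tnth_ord_tuple.
rewrite mpolyC0 !addr0.
case: i => [[|[|[|[|k]]]] Hi].
- by rewrite /tnth /= /VX; congr 'X_(_); apply: val_inj.
- by rewrite /tnth /= /VY; congr 'X_(_); apply: val_inj.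
- by rewrite /tnth /= /VS; congr 'X_(_); apply: val_inj.
- by rewrite /tnth /= /VT; congr 'X_(_); apply: val_inj.
- by [].
Qed.

Lemma shift0 (p : TP R) : shift 0 0 0 0 p = p.
Proof. by rewrite /shift tuple0 comp_mpoly_id. Qed.

Variables (l1 l2 s1 s2 e1 e2 : C).
Local Notation act := (tensor_act l1 e1 s1 l2 e2 s2).
Local Notation tY p := (shift 0 (-1) 0 0 p).
Local Notation tT p := (shift 0 0 0 (-1) p).
Local Notation X := (VX R).
Local Notation Y := (VY R).
Local Notation S := (VS R).
Local Notation T := (VT R).

Lemma actH0 p : act (gH 0) p = X * p + S * p.
Proof. rewrite /tensor_act. rewrite !expr0z mulr0z oppr0 shift0 !scale1r. by []. Qed.

Lemma actH1 p : act (gH 1) p = l1 *: (X * tY p) + l2 *: (S * tT p).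
Proof. rewrite /tensor_act !expr1z mulr1z. by []. Qed.

Lemma actL0 p : act (gL 0) p = Y * p + T * p.
Proof. rewrite /tensor_act !expr0z mulr0z oppr0 shift0 !scale1r !scale0r mul0r mpolyC0 !subr0 !addr0. by rewrite mul0r mpolyC0 addr0. Qed.

Lemma actL1 p : act (gL 1) p = l1 *: ((Y - X + e1%:MP) * tY p) + l2 *: ((T + S + e2%:MP) * tT p).
Proof. rewrite /tensor_act !expr1z mulr1z !scale1r !mul1r. by []. Qed.

Variable W : TP R -> Prop.
Hypothesis HW : is_submodule act W.
Hypothesis Hl : l1 != l2.
Hypothesis W1 : W 1.

Lemma WD p q : W p -> W q -> W (p + q).
Proof. by case: HW => _ H _ _; apply: H. Qed.
Lemma WZ (c : C) p : W p -> W (c *: p).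
Proof. by case: HW => _ _ H _; apply: H. Qed.
Lemma Wact x p : W p -> W (act x p).
Proof. by case: HW => _ _ _ H; apply: H. Qed.
Lemma WB p q : W p -> W q -> W (p - q).
Proof. by move=> Hp Hq; apply: WD => //; rewrite -scaleN1r; apply: WZ. Qed.

Lemma Wunscale p : W ((l1 - l2) *: p) -> W p.
Proof.
move=> H; have := @WZ (l1 - l2)^-1 _ H.
by rewrite scalerA mulVf ?scale1r // subr_eq0.
Qed.

End Aux.

Section T.
Variable R : realType.
Variables (l1 l2 s1 s2 e1 e2 : Cx R).
Local Notation act := (tensor_act l1 e1 s1 l2 e2 s2).
Local Notation tY p := (shift 0 (-1) 0 0 p).
Local Notation tT p := (shift 0 0 0 (-1) p).
Local Notation X := (VX R).
Local Notation Y := (VY R).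
Local Notation S := (VS R).
Local Notation T := (VT R).
Variable W : TP R -> Prop.
Hypothesis HW : is_submodule act W.
Hypothesis Hl : l1 != l2.
Hypothesis W1 : W 1.
Local Notation WD := (@WD R l1 l2 s1 s2 e1 e2 W HW).
Local Notation WZ := (@WZ R l1 l2 s1 s2 e1 e2 W HW).
Local Notation WB := (@WB R l1 l2 s1 s2 e1 e2 W HW).
Local Notation Wact := (@Wact R l1 l2 s1 s2 e1 e2 W HW).
Local Notation Wunscale := (@Wunscale R l1 l2 s1 s2 e1 e2 W HW Hl).
Local Notation Fd_diff := (@Fd_diff R).
Local Notation Fd_shift := (@Fd_shift R).
Local Notation Fd := (Fd R).
Local Notation actH0 := (@actH0 R l1 l2 s1 s2 e1 e2).
Local Notation actH1 := (@actH1 R l1 l2 s1 s2 e1 e2).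
Local Notation actL0 := (@actL0 R l1 l2 s1 s2 e1 e2).
Local Notation actL1 := (@actL1 R l1 l2 s1 s2 e1 e2).
Lemma step n (Hn : forall q, Fd n q -> W q) p (Fp : Fd n p) :
  [/\ W (X * p), W (S * p), W (Y * p) & W (T * p)].
Proof.
have Wp := Hn _ Fp.
have WXa : W (X * (tY p - p)) := Hn _ (Fd_diff 0 (-1) 0 0 _ _ v0 Fp).
have WYa : W (Y * (tY p - p)) := Hn _ (Fd_diff 0 (-1) 0 0 _ _ v1 Fp).
have WSb : W (S * (tT p - p)) := Hn _ (Fd_diff 0 0 0 (-1) _ _ v2 Fp).
have WTb : W (T * (tT p - p)) := Hn _ (Fd_diff 0 0 0 (-1) _ _ v3 Fp).
have WtY : W (tY p) := Hn _ (Fd_shift 0 (-1) 0 0 _ _ Fp).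
have WtT : W (tT p) := Hn _ (Fd_shift 0 0 0 (-1) _ _ Fp).
have WX : W (X * p).
  apply: Wunscale.
  have -> : (l1 - l2) *: (X * p) = act (gH 1) p - l2 *: act (gH 0) p
      - l1 *: (X * (tY p - p)) - l2 *: (S * (tT p - p)).
    rewrite actH1 actH0 -!mul_mpolyC mpolyCB.
    move: (tY p) => a; move: (tT p) => b; move: (l1%:MP_[4]) => c; move: (l2%:MP_[4]) => d; move: X => x; move: S => y; ring.
  apply: WB; last by apply: WZ.
  apply: WB; last by apply: WZ.
  by apply: WB; [apply: Wact | apply: WZ; apply: Wact].
have WS : W (S * p).
  have -> : S * p = act (gH 0) p - X * p by rewrite actH0 [X * p + _]addrC addrK.
  by apply: WB => //; apply: Wact.
have WY : W (Y * p).
  apply: Wunscale.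
  have -> : (l1 - l2) *: (Y * p) = act (gL 1) p - l2 *: act (gL 0) p
      - l1 *: (Y * (tY p - p)) + l1 *: (X * p) + l1 *: (X * (tY p - p))
      - (l1 * e1) *: tY p - l2 *: (T * (tT p - p)) - l2 *: (S * p)
      - l2 *: (S * (tT p - p)) - (l2 * e2) *: tT p.
    rewrite actL1 actL0 -!mul_mpolyC !mpolyCM mpolyCB.
    move: (tY p) => a; move: (tT p) => b; move: (l1%:MP_[4]) => c; move: (l2%:MP_[4]) => d; move: (e1%:MP_[4]) => f; move: (e2%:MP_[4]) => g; move: X => x; move: S => y; move: Y => z; move: T => t; ring.
  do 5 (apply: WB; last by apply: WZ).
  do 2 (apply: WD; last by apply: WZ).
  apply: WB; last by apply: WZ.
  by apply: WB; [apply: Wact | apply: WZ; apply: Wact].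
split => //.
have -> : T * p = act (gL 0) p - Y * p by rewrite actL0 [Y * p + _]addrC addrK.
by apply: WB => //; apply: Wact.
Qed.

Lemma levelW d : (forall n q, Fd n q -> (n < d)%N -> W q) ->
  forall n p, Fd n p -> (n <= d)%N -> W p.
Proof.
move=> IH n p; elim => {n p} [n c|n p _ IHp|n p q _ IHp _ IHq|n i p Hp _] Hle.
- by rewrite -[c%:MP]mulr1 mul_mpolyC; apply: WZ.
- by apply: IHp; apply: ltnW.
- by apply: WD; [apply: IHp | apply: IHq].
- have [WXp WSp WYp WTp] := @step n (fun q Hq => IH n q Hq Hle) p Hp.
  case: i Hp => [[|[|[|[|k]]]] Hi] Hp //.
Qed.

Lemma allW d n p : Fd n p -> (n <= d)%N -> W p.
Proof.
elim: d n p => [|d IH]; first by apply: levelW.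
apply: levelW => n q Hq Hlt; exact: IH Hq Hlt.
Qed.
End T.

Theorem proposition3p2 (R : realType) (l1 l2 s1 s2 e1 e2 : complex R) :
  l1 != 0 -> l2 != 0 -> s1 != 0 -> s2 != 0 -> l1 != l2 ->
  forall P : TP R, generated_submodule (tensor_act l1 e1 s1 l2 e2 s2) 1 P.
Proof.
move=> _ _ _ _ Hl P W HW W1.
have [d Hd] := Fd_all R P.
exact: (@allW R l1 l2 s1 s2 e1 e2 W HW Hl W1 d d P Hd (leqnn d)).
Qed.
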